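(* Let $\delta,\zeta\ge 0$, let $n$ be a perfect square, and let $s,\bar s$ be strings of length $n$ with $|\mathrm{lcs}(s,\bar s)|\ge n^{1-\delta}$, split into blocks $b_1,\dots,b_{\sqrt n}$ and $\bar b_1,\dots,\bar b_{\sqrt n}$ as in the context. Let $\widetilde U=\{(b_{i_k},\bar b_{j_k}):1\le k\le l\}$ be a set of block pairs with $i_1<\dots<i_l$, $j_1<\dots<j_l$, $l\ge n^{1/2-2\delta}/8$ and $|\mathrm{lcs}(b_{i_k},\bar b_{j_k})|\ge n^{1/2-\delta}/2$ for every $k$, and let $\widetilde U_1\subseteq\widetilde U$ be the set of pairs in $\widetilde U$ that approximately consist of crebris symbols. If $|\widetilde U_1|\ge|\widetilde U|/2$, then the expected length of the solution returned by Algorithm A3 on $s,\bar s$ is $\Omega(n^{1/2+\zeta})$.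
   Context: $\mathrm{lcs}(x,y)$ denotes a longest common subsequence of $x,y$; $\mathsf{fr}_c(x)$ is the number of occurrences of symbol $c$ in $x$. The strings $s,\bar s$ are split into $\sqrt n$ consecutive blocks of length $\sqrt n$; $b_i,\bar b_i$ are the $i$-th blocks. For a block pair $(b_i,\bar b_j)$, a symbol $c$ is crebris if $\min\{\mathsf{fr}_c(b_i),\mathsf{fr}_c(\bar b_j)\}\ge n^{4\delta+\zeta}$. The pair approximately consists of crebris symbols if $\sum_{c\in C}\mathsf{fr}_c(b_i)\ge n^{1/2-2\delta}/4$, where $C$ is the set of crebris symbols of the pair. Algorithm A3 (randomized): for every $i,j\in[\sqrt n]$ pick a uniformly random position of $b_i$, let $c_{i,j}$ be the symbol there, and set $T[i][j]=\min\{\mathsf{fr}_{c_{i,j}}(b_i),\mathsf{fr}_{c_{i,j}}(\bar b_j)\}$. Compute $D[i][j]=0$ if $i=0$ or $j=0$, and $D[i][j]=\max\{D[i][j-1],D[i-1][j],T[i][j]+D[i-1][j-1]\}$ otherwise. The returned solution is the longest common subsequence of $s,\bar s$ subject to: characters of one block of $s$ are matched only to characters of a single block of $\bar s$ and vice versa, and if $b_i$ is matched to $\bar b_j$ all matched symbols are $c_{i,j}$; its length is $D[\sqrt n][\sqrt n]$. *)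

(* Defs.v *)
From HB Require Import structures.
From mathcomp Require Import all_boot all_order all_algebra.
From mathcomp Require Import reals exp.
Set Implicit Arguments. Unset Strict Implicit. Unset Printing Implicit Defensive.
Import Order.TTheory GRing.Theory Num.Theory.

Section Defs.
Variable T : finType.

Definition fr (c : T) (x : seq T) : nat := count_mem c x.

(* |lcs(x,y)| : maximal length of a common subsequence (subsequences of x
   are exactly the masks of x) *)
Definition lcs_len (x y : seq T) : nat :=
  \max_(b : (size x).-tuple bool | subseq (mask b x) y)
     size (mask b x).

(* i-th block (0-indexed) of length m of a string *)
Definition block (m : nat) (s : seq T) (i : nat) : seq T :=
  take m (drop (i * m) s).

Definition crebris {R : realType} (n : nat) (delta zeta : R)
    (bi bj : seq T) (c : T) : bool :=
  (n%:R `^ (4 * delta + zeta) <= ((minn (fr c bi) (fr c bj))%:R : R))%R.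

Definition approx_crebris {R : realType} (n : nat) (delta zeta : R)
    (bi bj : seq T) : bool :=
  (n%:R `^ (1 / 2 - 2 * delta) / 4 <=
     ((\sum_(c : T | crebris n delta zeta bi bj c) fr c bi)%N)%:R :> R)%R.

(* T[i][j] of Algorithm A3, 0-indexed blocks, given the random positions P *)
Definition A3_T (m : nat) (s sb : seq T) (P : {ffun 'I_m * 'I_m -> 'I_m})
    (i j : nat) : nat :=
  match (insub i : option 'I_m), (insub j : option 'I_m) with
  | Some a, Some b =>
      let bi := block m s i in
      let bj := block m sb j in
      match onth bi (P (a, b)) with
      | Some c => minn (fr c bi) (fr c bj)
      | None => 0
      end
  | _, _ => 0
  end.

(* D[i][j] : D[i][j] = 0 if i = 0 or j = 0, otherwise
   max {D[i][j-1], D[i-1][j], T[i][j] + D[i-1][j-1]} (T 1-indexed in paper,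
   here Tt (i-1) (j-1)). *)
Fixpoint A3_D (Tt : nat -> nat -> nat) (i j : nat) {struct i} : nat :=
  match i with
  | 0 => 0
  | i'.+1 =>
      (fix Dj (j : nat) : nat :=
         match j with
         | 0 => 0
         | j'.+1 => maxn (Dj j') (maxn (A3_D Tt i' j'.+1) (Tt i' j' + A3_D Tt i' j'))
         end) j
  end.

Definition A3_len (m : nat) (s sb : seq T) (P : {ffun 'I_m * 'I_m -> 'I_m}) : nat :=
  A3_D (A3_T s sb P) m m.

(* expected length: the positions are independent and uniform, i.e. P is
   uniform over all functions 'I_m * 'I_m -> 'I_m *)
Definition A3_expected {R : realType} (m : nat) (s sb : seq T) : R :=
  ((\sum_(P : {ffun 'I_m * 'I_m -> 'I_m}) (A3_len s sb P)%:R)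
     / (#|{ffun 'I_m * 'I_m -> 'I_m}|)%:R)%R.

End Defs.

(* Main.v *)
Require Import Defs.
From HB Require Import structures.
From mathcomp Require Import all_boot all_order all_algebra.
From mathcomp Require Import reals exp.
From mathcomp Require Import ring lra.
Import Order.TTheory GRing.Theory Num.Theory.

Lemma DSS Tt i j : A3_D Tt i.+1 j.+1 =
  maxn (A3_D Tt i.+1 j) (maxn (A3_D Tt i j.+1) (Tt i j + A3_D Tt i j)).
Proof. by []. Qed.

Lemma D0j Tt j : A3_D Tt 0 j = 0. Proof. by []. Qed.
Lemma Di0 Tt i : A3_D Tt i 0 = 0. Proof. by case: i. Qed.

Lemma D_monoj Tt i j j' : (j <= j')%N -> (A3_D Tt i j <= A3_D Tt i j')%N.
Proof.
move=> /subnK <-; elim: (j' - j)%N => [|d IH] //=.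
apply: (leq_trans IH); case: i {IH} => [|i] //; rewrite ?addSn DSS; exact: leq_maxl.
Qed.

Lemma D_monoi Tt i i' j : (i <= i')%N -> (A3_D Tt i j <= A3_D Tt i' j)%N.
Proof.
move=> /subnK <-; elim: (i' - i)%N => [|d IH] //.
apply: (leq_trans IH); case: j {IH} => [|j]; first by rewrite !Di0.
rewrite ?addSn DSS; apply: leq_trans (leq_maxr _ _); exact: leq_maxl.
Qed.

Lemma D_step Tt i j : (Tt i j + A3_D Tt i j <= A3_D Tt i.+1 j.+1)%N.
Proof. rewrite DSS; apply: leq_trans (leq_maxr _ _); exact: leq_maxr. Qed.

Lemma D_chain (X : eqType) (f g : X -> nat) Tt (U : seq X) :
  pairwise (fun a b => (f a < f b)%N && (g a < g b)%N) U ->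
  forall i j, (forall k, k \in U -> (f k < i)%N && (g k < j)%N) ->
  (\sum_(k <- U) Tt (f k) (g k) <= A3_D Tt i j)%N.
Proof.
elim/last_ind: U => [|U x IH]; first by rewrite big_nil.
rewrite pairwise_rcons => /andP[Hall Hpw] i j Hin.
rewrite big_rcons /=.
have /andP[Hxi Hxj] : (f x < i)%N && (g x < j)%N.
  by apply: Hin; rewrite mem_rcons mem_head.
apply: leq_trans (@D_monoi Tt _ _ j Hxi).
apply: leq_trans (@D_monoj Tt (f x).+1 _ _ Hxj).
apply: leq_trans (D_step Tt _ _).
rewrite addnC leq_add2l; apply: IH => // k Hk.
move/allP: Hall => /(_ k Hk) /andP[H1 H2].
by rewrite H1 H2.
Qed.
Lemma count_sum_fr (T : finType) (a : pred T) (s : seq T) :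
  count a s = (\sum_(c : T | a c) fr c s)%N.
Proof.
elim: s => [|x s IH] /=.
  by rewrite big1 // => c _; rewrite /fr.
rewrite /fr /= in IH *.
rewrite (eq_bigr (fun c => (x == c) + count_mem c s)%N) //.
rewrite big_split /= -IH; congr (_ + _)%N.
case: (boolP (a x)) => ax.
  rewrite (bigD1 x) //= eqxx big1 ?addn0 // => c /andP[_ /negPf].
  by rewrite eq_sym => ->.
by rewrite big1 // => c ac; apply/eqP; rewrite eqb0; apply: contraNneq ax => ->.
Qed.

Local Open Scope ring_scope.

Lemma sum_onth (R : numDomainType) (X : Type) (G : option X -> R) (s : seq X) :
  \sum_(i < size s) G (onth s i) = \sum_(c <- s) G (Some c).
Proof.
elim: s => [|c s IH]; first by rewrite big_ord0 big_nil.
by rewrite /= big_ord_recl big_cons IH.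
Qed.

Lemma sum_ffun_coord (R : numDomainType) (I J : finType) (k : I) (g : J -> R) :
  \sum_(P : {ffun I -> J}) g (P k) = (\sum_j g j) * (#|J|%:R ^+ #|I|.-1).
Proof.
have E : forall P : {ffun I -> J}, g (P k) =
   \prod_i (if i == k then g (P i) else 1).
  by move=> P; rewrite (bigD1 k) //= eqxx big1 ?mulr1 // => i /negPf ->.
rewrite (eq_bigr _ (fun P _ => E P)).
rewrite -(bigA_distr_bigA (fun i j => if i == k then g j else 1)) /=.
rewrite (bigD1 k) //= eqxx; congr (_ * _).
rewrite (eq_bigr (fun _ => #|J|%:R)).
  by rewrite prodr_const cardC1.
by move=> i /negPf ->; rewrite sumr_const.
Qed.

Lemma size_block (T : finType) m (s : seq T) i :
  size s = (m * m)%N -> (i < m)%N -> size (block m s i) = m.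
Proof.
move=> Hs Hi; rewrite /block size_takel // size_drop Hs -mulnBl.
by apply: leq_pmull; rewrite subn_gt0.
Qed.

Lemma A3_T_ord (T : finType) m (s sb : seq T) (P : {ffun 'I_m * 'I_m -> 'I_m})
  (a b : 'I_m) : A3_T s sb P a b =
  match onth (block m s a) (P (a, b)) with
  | Some c => minn (fr c (block m s a)) (fr c (block m sb b))
  | None => 0%N end.
Proof. by rewrite /A3_T !valK. Qed.

Lemma sum_if_count (R : numDomainType) (X : Type) (p : pred X) (B : R) s :
  \sum_(c <- s) (if p c then B else 0) = B * (count p s)%:R.
Proof.
elim: s => [|x s IH]; first by rewrite big_nil mulr0.
rewrite big_cons IH /= natrD mulrDr; case: (p x); by rewrite ?mulr1 ?mulr0 ?add0r.
Qed.

Lemma pair_bound (R : realType) (T : finType) (n : nat) (delta zeta : R)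
  m (bi bj : seq T) : size bi = m ->
  n%:R `^ (4 * delta + zeta) *
    ((\sum_(c : T | crebris n delta zeta bi bj c) fr c bi)%N)%:R <=
  \sum_(x : 'I_m) ((match onth bi x with
      | Some c => minn (fr c bi) (fr c bj) | None => 0%N end)%:R : R).
Proof.
move=> Hm; subst m.
rewrite (@sum_onth R _ (fun o => ((match o with
      | Some c => minn (fr c bi) (fr c bj) | None => 0%N end)%:R : R))).
rewrite -count_sum_fr -sum_if_count.
apply: ler_sum => c _.
by case: ifP => // _.
Qed.

Theorem mainTheorem3 (R : realType) (delta zeta : R) :
  0 <= delta -> 0 <= zeta ->
  exists c : R, 0 < c /\ exists N : nat,
  forall (n m : nat), n = (m * m)%N -> (N <= n)%N ->
  forall (Sigma : finType) (s sb : seq Sigma),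
    size s = n -> size sb = n ->
    n%:R `^ (1 - delta) <= (lcs_len s sb)%:R ->
  forall U : seq ('I_m * 'I_m),
    sorted (fun a b : 'I_m * 'I_m => (a.1 < b.1)%N && (a.2 < b.2)%N) U ->
    n%:R `^ (1 / 2 - 2 * delta) / 8 <= (size U)%:R ->
    (forall k : 'I_m * 'I_m, k \in U ->
       n%:R `^ (1 / 2 - delta) / 2 <=
         (lcs_len (block m s k.1) (block m sb k.2))%:R) ->
    (size U)%:R / 2 <=
      (size [seq k : 'I_m * 'I_m <- U | approx_crebris n delta zeta
                            (block m s k.1) (block m sb k.2)])%:R :> R ->
    c * n%:R `^ (1 / 2 + zeta) <= A3_expected (R:=R) m s sb.
Proof.
move=> Hd Hz; exists (1 / 64); split; first by rewrite divr_gt0.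
exists 1%N => n m -> Hn Sigma s sb Hs Hsb _ U Hsort HU _ HU1.
have m0 : (0 < m)%N by rewrite lt0n; apply/eqP => E; rewrite E in Hn.
set p := fun k : 'I_m * 'I_m => approx_crebris (m * m) delta zeta
                            (block m s k.1) (block m sb k.2).
set A := ((m * m)%N%:R : R) `^ (1 / 2 - 2 * delta).
set B := ((m * m)%N%:R : R) `^ (4 * delta + zeta).
set h := fun (k : 'I_m * 'I_m) (x : 'I_m) =>
  (match onth (block m s k.1) x with
   | Some c => minn (fr c (block m s k.1)) (fr c (block m sb k.2))
   | None => 0%N end).
have step1 : forall P : {ffun 'I_m * 'I_m -> 'I_m}, (\sum_(k <- U | p k) h k (P k) <= A3_len s sb P)%N.
  move=> P.
  have -> : (\sum_(k <- U | p k) h k (P k) =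
             \sum_(k <- U | p k) A3_T s sb P k.1 k.2)%N.
    by apply: eq_bigr => -[a b] _; rewrite A3_T_ord.
  apply: leq_trans (_ : \sum_(k <- U) A3_T s sb P k.1 k.2 <= _)%N.
    rewrite big_mkcond /=; apply: leq_sum => k _; by case: (p k).
  apply: (@D_chain _ (fun k => nat_of_ord k.1) (fun k => nat_of_ord k.2)).
    rewrite -sorted_pairwise //.
    move=> y x z /andP[H1 H2] /andP[H3 H4].
    by rewrite (ltn_trans H1 H3) (ltn_trans H2 H4).
  by move=> k _; rewrite !ltn_ord.
set M : R := m%:R ^+ (m * m).-1.
have M0 : 0 <= M by rewrite /M exprn_ge0.
set S := \sum_(P : {ffun 'I_m * 'I_m -> 'I_m}) ((A3_len s sb P)%:R : R).
have step2 : \sum_(k <- U | p k) (\sum_(x : 'I_m) ((h k x)%:R : R)) * M <= S.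
  have -> : \sum_(k <- U | p k) (\sum_(x : 'I_m) ((h k x)%:R : R)) * M =
     \sum_(k <- U | p k) \sum_(P : {ffun 'I_m * 'I_m -> 'I_m}) ((h k (P k))%:R : R).
    apply: eq_bigr => k _.
    by rewrite (@sum_ffun_coord R _ _ k (fun x => ((h k x)%:R : R))) card_prod !card_ord.
  rewrite exchange_big /=; apply: ler_sum => P _.
  by rewrite -natr_sum ler_nat.
have nR0 : (0 : R) < (m * m)%N%:R by rewrite ltr0n.
have HA : 0 <= A by exact: powR_ge0.
have HB : 0 <= B by exact: powR_ge0.
have step3 : forall k, p k -> B * (A / 4) <= \sum_(x : 'I_m) ((h k x)%:R : R).
  move=> k pk.
  apply: le_trans (@pair_bound R Sigma (m * m) delta zeta m (block m s k.1)
     (block m sb k.2) (size_block _ _ _ _ Hs (ltn_ord k.1))).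
  by apply: ler_wpM2l => //; exact: pk.
set L : R := (count p U)%:R.
have step4 : B * (A / 4) * L * M <= S.
  apply: le_trans step2.
  rewrite /L -sum_if_count -big_mkcond /= mulr_suml.
  by apply: ler_sum => k pk; rewrite ler_wpM2r // step3.
have HL : A / 16 <= L.
  rewrite /L -size_filter.
  apply: le_trans HU1.
  have -> : A / 16 = (A / 8) / 2 by lra.
  by rewrite ler_pdivlMr // divfK ?pnatr_eq0 //.
rewrite /A3_expected card_ffun card_prod !card_ord -/S.
have Em : ((m ^ (m * m))%N%:R : R) = m%:R * M.
  by rewrite natrX /M -exprS prednK // muln_gt0 m0.
rewrite Em ler_pdivlMr; last by rewrite mulr_gt0 // ?ltr0n // exprn_gt0 // ltr0n.
apply: le_trans step4.
have pD : forall r t, ((m * m)%N%:R : R) `^ (r + t) =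
    ((m * m)%N%:R : R) `^ r * ((m * m)%N%:R : R) `^ t.
  by move=> r t; rewrite powRD // (gt_eqF nR0) implybT.
have Hsq : ((m * m)%N%:R : R) `^ (1 / 2) = m%:R.
  rewrite div1r powR12_sqrt ?ler0n // natrM -expr2 sqrtr_sqr.
  by rewrite ger0_norm // ler0n.
have HX : ((m * m)%N%:R : R) `^ (1 / 2 + zeta) * m%:R = A * A * B.
  rewrite -Hsq -pD /A /B -!pD; congr (_ `^ _); lra.
have -> : 1 / 64 * (m * m)%N%:R `^ (1 / 2 + zeta) * (m%:R * M) =
   1 / 64 * ((m * m)%N%:R `^ (1 / 2 + zeta) * m%:R) * M by ring.
rewrite HX ler_wpM2r //.
have H1 : 0 <= B * A * (L - A / 16) by rewrite !mulr_ge0 // subr_ge0.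
lra.
Qed.
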